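(* Let $\mathcal H$ be a Hilbert space and $\mathcal S,\mathcal W,\mathcal A\subseteq\mathcal H$ closed subspaces such that $\mathcal S,\mathcal W,\mathcal A,\mathcal S^\perp,\mathcal W^\perp,\mathcal A^\perp$ are nonzero and $\mathcal A\oplus\mathcal S^\perp=\mathcal H$. Let $0\le\lambda\le\cos(\mathcal A,\mathcal S)$, $T_\lambda:=\lambda P_{\mathcal W}P_{\mathcal A\mathcal S^\perp}+(1-\lambda)P_{\mathcal W}P_{\mathcal S}$, $R_\lambda:=P_{\mathcal W}-T_\lambda$ and $E_\lambda:=I-T_\lambda$. Then for all $x\in\mathcal H$, $$\|R_\lambda x\|\le\sqrt2\,\|x\|\qquad\text{and}\qquad\|E_\lambda x\|\le\sqrt3\,\|x\|.$$
   Context: $P_{\mathcal V}$ is the orthogonal projection onto a closed subspace $\mathcal V$, $\mathcal V^\perp$ its orthogonal complement, $I$ the identity. For closed subspaces with $\mathcal V_1\oplus\mathcal V_2=\mathcal H$, $P_{\mathcal V_1\mathcal V_2}$ is the oblique projection onto $\mathcal V_1$ along $\mathcal V_2$ (identity on $\mathcal V_1$, zero on $\mathcal V_2$). $\cos(\mathcal V_1,\mathcal V_2):=\inf_{0\ne x\in\mathcal V_1}\|P_{\mathcal V_2}x\|/\|x\|$. *)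

(* Defs.v *)
From Stdlib Require Import Reals.
Open Scope R_scope.

Record HilbertSpace := {
  hs_car :> Type;
  hs_zero : hs_car;
  hs_add : hs_car -> hs_car -> hs_car;
  hs_opp : hs_car -> hs_car;
  hs_scal : R -> hs_car -> hs_car;
  hs_inner : hs_car -> hs_car -> R;
  hs_addA : forall x y z, hs_add x (hs_add y z) = hs_add (hs_add x y) z;
  hs_addC : forall x y, hs_add x y = hs_add y x;
  hs_add0 : forall x, hs_add x hs_zero = x;
  hs_addN : forall x, hs_add x (hs_opp x) = hs_zero;
  hs_scalA : forall a b x, hs_scal a (hs_scal b x) = hs_scal (a * b) x;
  hs_scal1 : forall x, hs_scal 1 x = x;
  hs_scalDr : forall a x y, hs_scal a (hs_add x y) = hs_add (hs_scal a x) (hs_scal a y);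
  hs_scalDl : forall a b x, hs_scal (a + b) x = hs_add (hs_scal a x) (hs_scal b x);
  hs_innerC : forall x y, hs_inner x y = hs_inner y x;
  hs_innerDl : forall x y z, hs_inner (hs_add x y) z = hs_inner x z + hs_inner y z;
  hs_innerZl : forall a x y, hs_inner (hs_scal a x) y = a * hs_inner x y;
  hs_inner_ge0 : forall x, 0 <= hs_inner x x;
  hs_inner_eq0 : forall x, hs_inner x x = 0 -> x = hs_zero;
  hs_complete : forall u : nat -> hs_car,
    (forall eps, eps > 0 -> exists N, forall n m, (n >= N)%nat -> (m >= N)%nat ->
        sqrt (hs_inner (hs_add (u n) (hs_opp (u m))) (hs_add (u n) (hs_opp (u m)))) < eps) ->
    exists l, forall eps, eps > 0 -> exists N, forall n, (n >= N)%nat ->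
        sqrt (hs_inner (hs_add (u n) (hs_opp l)) (hs_add (u n) (hs_opp l))) < eps
}.

Arguments hs_zero {h}.
Arguments hs_add {h}.
Arguments hs_opp {h}.
Arguments hs_scal {h}.
Arguments hs_inner {h}.

Section Ops.
Variable H : HilbertSpace.

Definition vsub (x y : H) : H := hs_add x (hs_opp y).
Definition hnorm (x : H) : R := sqrt (hs_inner x x).

Definition closed_subspace (S : H -> Prop) : Prop :=
  S hs_zero /\
  (forall x y, S x -> S y -> S (hs_add x y)) /\
  (forall a x, S x -> S (hs_scal a x)) /\
  (forall (u : nat -> H) (l : H), (forall n, S (u n)) ->
     (forall eps, eps > 0 -> exists N, forall n, (n >= N)%nat -> hnorm (vsub (u n) l) < eps) ->
     S l).

Definition orth (S : H -> Prop) : H -> Prop :=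
  fun x => forall y, S y -> hs_inner x y = 0.

Definition nonzero_sub (S : H -> Prop) : Prop := exists x, S x /\ x <> hs_zero.

Definition is_orth_proj (V : H -> Prop) (P : H -> H) : Prop :=
  forall x, V (P x) /\ orth V (vsub x (P x)).

Definition direct_sum_full (V1 V2 : H -> Prop) : Prop :=
  (forall x, exists a b, V1 a /\ V2 b /\ x = hs_add a b) /\
  (forall x, V1 x -> V2 x -> x = hs_zero).

Definition is_oblique_proj (V1 V2 : H -> Prop) (Q : H -> H) : Prop :=
  forall x, V1 (Q x) /\ V2 (vsub x (Q x)).

(* c = cos(V1, V2) = inf_{0 <> x in V1} ||P_{V2} x|| / ||x||, where PV2 is the
   orthogonal projection onto V2. *)
Definition is_cos (V1 : H -> Prop) (PV2 : H -> H) (c : R) : Prop :=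
  let E := fun r => exists x, V1 x /\ x <> hs_zero /\ r = hnorm (PV2 x) / hnorm x in
  (forall r, E r -> c <= r) /\ (forall b, (forall r, E r -> b <= r) -> b <= c).

End Ops.

Arguments vsub {H}.
Arguments hnorm {H}.
Arguments closed_subspace {H}.
Arguments orth {H}.
Arguments nonzero_sub {H}.
Arguments is_orth_proj {H}.
Arguments direct_sum_full {H}.
Arguments is_oblique_proj {H}.
Arguments is_cos {H}.

(* Main.v *)
Require Import Defs.
From Stdlib Require Import Reals Lra.
Open Scope R_scope.

Lemma ip_addr (H : HilbertSpace) (x y z : H) :
  hs_inner x (hs_add y z) = hs_inner x y + hs_inner x z.
Proof. rewrite (hs_innerC H x), (hs_innerC H x y), (hs_innerC H x z). apply hs_innerDl. Qed.

Lemma ip_scalr (H : HilbertSpace) a (x y : H) :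
  hs_inner x (hs_scal a y) = a * hs_inner x y.
Proof. rewrite (hs_innerC H x), (hs_innerC H x y). apply hs_innerZl. Qed.

Lemma ip_zerol (H : HilbertSpace) (y : H) : hs_inner hs_zero y = 0.
Proof.
  assert (E : hs_inner (hs_add (@hs_zero H) hs_zero) y = hs_inner hs_zero y)
    by now rewrite hs_add0.
  rewrite hs_innerDl in E. lra.
Qed.

Lemma ip_zeror (H : HilbertSpace) (y : H) : hs_inner y hs_zero = 0.
Proof. rewrite hs_innerC. apply ip_zerol. Qed.

Lemma ip_oppl (H : HilbertSpace) (x y : H) : hs_inner (hs_opp x) y = - hs_inner x y.
Proof.
  assert (E := hs_innerDl H x (hs_opp x) y). rewrite hs_addN, ip_zerol in E. lra.
Qed.

Lemma ip_oppr (H : HilbertSpace) (x y : H) : hs_inner y (hs_opp x) = - hs_inner y x.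
Proof. rewrite hs_innerC, ip_oppl, hs_innerC. reflexivity. Qed.

Hint Rewrite hs_innerDl ip_addr hs_innerZl ip_scalr ip_oppl ip_oppr ip_zerol ip_zeror : ip.

Ltac ipx := unfold vsub in *; autorewrite with ip in *.

Lemma opp_scal (H : HilbertSpace) (x : H) : hs_opp x = hs_scal (-1) x.
Proof.
  assert (D : hs_inner (vsub (hs_opp x) (hs_scal (-1) x)) (vsub (hs_opp x) (hs_scal (-1) x)) = 0).
  { ipx. ring. }
  apply hs_inner_eq0 in D. unfold vsub in D.
  set (u := hs_opp x) in *. set (v := hs_scal (-1) x) in *.
  transitivity (hs_add u (hs_add v (hs_opp v))).
  - rewrite hs_addN, hs_add0. reflexivity.
  - rewrite (hs_addC H v), hs_addA, D, hs_addC, hs_add0. reflexivity.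
Qed.

Lemma cs_opp (H : HilbertSpace) (S : H -> Prop) x :
  closed_subspace S -> S x -> S (hs_opp x).
Proof. intros (_ & _ & hZ & _) Hx. rewrite opp_scal. now apply hZ. Qed.

Lemma cs_add (H : HilbertSpace) (S : H -> Prop) x y :
  closed_subspace S -> S x -> S y -> S (hs_add x y).
Proof. intros (_ & hA & _ & _). apply hA. Qed.

Lemma cs_scal (H : HilbertSpace) (S : H -> Prop) a x :
  closed_subspace S -> S x -> S (hs_scal a x).
Proof. intros (_ & _ & hZ & _). apply hZ. Qed.

Lemma pyth_le (H : HilbertSpace) (y r : H) :
  hs_inner (vsub y r) r = 0 -> hs_inner r r <= hs_inner y y.
Proof.
  intros E. assert (G := hs_inner_ge0 H (vsub y r)).
  ipx. rewrite (hs_innerC H r y) in *. lra.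
Qed.

Lemma nz_pos (H : HilbertSpace) (a : H) : a <> hs_zero -> 0 < hnorm a.
Proof.
  intros nz. unfold hnorm. apply sqrt_lt_R0.
  destruct (hs_inner_ge0 H a) as [h|h]; auto.
  exfalso. apply nz, hs_inner_eq0. auto.
Qed.

Theorem mainTheorem9 (H : HilbertSpace) (S W A : H -> Prop)
  (PS PW QAS : H -> H) (c lam : R) :
  closed_subspace S -> closed_subspace W -> closed_subspace A ->
  nonzero_sub S -> nonzero_sub W -> nonzero_sub A ->
  nonzero_sub (orth S) -> nonzero_sub (orth W) -> nonzero_sub (orth A) ->
  direct_sum_full A (orth S) ->
  is_orth_proj S PS -> is_orth_proj W PW ->
  is_oblique_proj A (orth S) QAS ->
  is_cos A PS c ->
  0 <= lam -> lam <= c ->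
  let T := fun x : H => hs_add (hs_scal lam (PW (QAS x))) (hs_scal (1 - lam) (PW (PS x))) in
  let Rl := fun x : H => vsub (PW x) (T x) in
  let El := fun x : H => vsub x (T x) in
  forall x : H, hnorm (Rl x) <= sqrt 2 * hnorm x /\ hnorm (El x) <= sqrt 3 * hnorm x.
Proof.
  intros hS hW hA nS nW nA nSo nWo nAo dsum PSp PWp Qp [cos1 _] l0 lc T Rl El x.
  assert (c1 : c <= 1).
  { destruct nA as [a0 [Aa0 a0nz]].
    assert (Hc := cos1 _ (ex_intro _ a0 (conj Aa0 (conj a0nz eq_refl)))).
    destruct (PSp a0) as [Sa Oa].
    assert (Hle : hnorm (PS a0) <= hnorm a0).
    { unfold hnorm. apply sqrt_le_1_alt. apply pyth_le. apply Oa, Sa. }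
    assert (Hp := nz_pos H a0 a0nz).
    assert (hnorm (PS a0) / hnorm a0 <= 1).
    { unfold Rdiv. rewrite <- (Rinv_r (hnorm a0)) by lra.
      apply Rmult_le_compat_r; [apply Rlt_le, Rinv_0_lt_compat; lra | lra]. }
    lra. }
  set (p := PS x). set (q := QAS x). set (psq := PS q).
  destruct (PSp x) as [Sp Op]. destruct (Qp x) as [Aq Oq].
  destruct (PSp q) as [Spsq Opsq]. fold p in Sp, Op. fold q in Aq, Oq. fold psq in Spsq, Opsq.
  assert (e1 := Op _ Sp). assert (e2 := Op _ Spsq).
  assert (e3 := Oq _ Sp). assert (e4 := Oq _ Spsq).
  assert (e5 := Opsq _ Sp). assert (e6 := Opsq _ Spsq).
  ipx.
  assert (pp_ge := hs_inner_ge0 H p). assert (qq_ge := hs_inner_ge0 H q).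
  assert (Epsq : hs_inner psq psq = hs_inner p p).
  { rewrite (hs_innerC H p psq) in *. lra. }
  assert (Key : lam * lam * hs_inner q q <= hs_inner p p).
  { destruct (Req_dec (hs_inner q q) 0) as [z|nz].
    - rewrite z. lra.
    - assert (qnz : q <> hs_zero). { intro E. apply nz. rewrite E. apply ip_zerol. }
      assert (Hc := cos1 _ (ex_intro _ q (conj Aq (conj qnz eq_refl)))).
      fold psq in Hc.
      assert (Hp := nz_pos H q qnz).
      assert (L : lam * hnorm q <= hnorm psq).
      { apply Rmult_le_reg_r with (/ hnorm q). apply Rinv_0_lt_compat; lra.
        rewrite Rmult_assoc, Rinv_r by lra. rewrite Rmult_1_r. fold (Rdiv (hnorm psq) (hnorm q)). lra. }
      assert (L2 : (lam * hnorm q) * (lam * hnorm q) <= hnorm psq * hnorm psq).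
      { apply Rmult_le_compat; try lra; apply Rmult_le_pos; try lra; apply Rlt_le, Hp. }
      unfold hnorm in L2.
      replace (lam * sqrt (hs_inner q q) * (lam * sqrt (hs_inner q q)))
        with (lam * lam * (sqrt (hs_inner q q) * sqrt (hs_inner q q))) in L2 by ring.
      rewrite !sqrt_sqrt in L2 by (try apply hs_inner_ge0; lra). lra. }
  set (y := vsub (vsub x (hs_scal lam q)) (hs_scal (1 - lam) p)).
  set (r := Rl x).
  assert (Wr : W r).
  { unfold r, Rl, T, vsub. apply cs_add; auto. apply (proj1 (PWp x)).
    apply cs_opp; auto. apply cs_add; auto; apply cs_scal; auto.
    apply (proj1 (PWp q)). apply (proj1 (PWp p)). }
  assert (Oyr : forall w, W w -> hs_inner (vsub y r) w = 0).
  { intros w Ww.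
    assert (f1 := proj2 (PWp x) w Ww). assert (f2 := proj2 (PWp q) w Ww).
    assert (f3 := proj2 (PWp p) w Ww).
    unfold y, r, Rl, T. fold p q. ipx.
    assert (g1 : hs_inner x w = hs_inner (PW x) w) by lra.
    assert (g2 : hs_inner q w = hs_inner (PW q) w) by lra.
    assert (g3 : hs_inner p w = hs_inner (PW p) w) by lra.
    rewrite g1, g2, g3. ring. }
  assert (rr : hs_inner r r <= hs_inner y y) by (apply pyth_le, Oyr, Wr).
  assert (yy : hs_inner y y <= 2 * hs_inner x x).
  { assert (G := hs_inner_ge0 H (hs_add (vsub x p) (hs_scal lam (vsub q p)))).
    assert (G2 : 0 <= lam * lam * hs_inner p p) by (apply Rmult_le_pos; nra).
    unfold y. ipx. try rewrite (hs_innerC H p x) in *; try rewrite (hs_innerC H p q) in *; try rewrite (hs_innerC H q x) in *.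
    nra. }
  assert (xx_ge := hs_inner_ge0 H x).
  split.
  - fold r. unfold hnorm. rewrite <- sqrt_mult by lra. apply sqrt_le_1_alt. lra.
  -
    assert (t1 := proj2 (PWp x) r Wr). assert (t2 := proj2 (PWp x) _ (proj1 (PWp x))).
    assert (EE : hs_inner (El x) (El x) <= 3 * hs_inner x x).
    { assert (t3 := pyth_le H x (PW x) t2).
      unfold El. unfold r, Rl in t1, rr. set (t := T x) in *. set (u := PW x) in *.
      ipx. try rewrite (hs_innerC H t x) in *; try rewrite (hs_innerC H t u) in *; try rewrite (hs_innerC H u x) in *. assert (uu := hs_inner_ge0 H u). lra. }
    unfold hnorm. rewrite <- sqrt_mult by lra. apply sqrt_le_1_alt. lra.
Qed.
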